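(* Let $\hat{P}$ be an accelerated CFA (obtained from a CFA $P$ by adding, for looping traces $\pi_1,\dots,\pi_k$ of $P$ with heads $v_1,\dots,v_k$, non-branching loops at $v_j$ labelled by (possibly under-approximating) accelerators $\hat{\pi}_j$), and let $\mathcal{L}_R$ be its restriction language. Let $\rho_1$ be a trace accepted by $\hat{P}$ with $\rho_1\in\mathcal{L}_R$. Then there exists a trace $\rho_2$ accepted by $\hat{P}$ such that $\rho_1\preceq\rho_2$ and $\rho_1$ is not a sub-trace of $\rho_2$.
   Context: Programs are over a finite set of program variables; a state assigns a value to each variable. Statements are assignments $x:=e$, nondeterministic assignments $x:=*$, assumptions $[B]$, and $\mathsf{skip}$; each denotes a relation on states, and a trace (finite statement sequence) denotes the composition of its statements' relations in order (empty trace: identity); $[\![\pi]\!]^n$ is the $n$-fold composition. Different occurrences of statements are distinguishable (by program location). A CFA $P=\langle V,E,v_0\rangle$ has finite vertex set, statement-labelled edges, and initial vertex $v_0$; a trace of it is the label sequence of a path; it is looping with head $v$ if the path starts and ends at $v$, and accepted if the path starts at $v_0$. An accelerator for a looping trace $\pi$ is a statement sequence $\hat{\pi}$ with $[\![\hat{\pi}]\!]=\bigcup_{i\ge0}[\![\pi]\!]^i$; an under-approximating accelerator is a statement sequence $\hat{\pi}$ with a function $\beta$ from states to $\mathbb{N}_0$ such that $\langle\sigma,\sigma'\rangle\in[\![\hat{\pi}]\!]$ iff $\exists i\le\beta(\sigma)$ with $\langle\sigma,\sigma'\rangle\in[\![\pi]\!]^i$, where $i\le\beta(\sigma)$ and $\langle\sigma,\sigma'\rangle\in[\![\pi]\!]^i$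 imply $\beta(\sigma')\le\beta(\sigma)-i$. A trace $\rho$ is subsumed by $\rho'$, written $\rho\preceq\rho'$, if $[\![\rho]\!]\subseteq[\![\rho']\!]$. The restriction language $\mathcal{L}_R$ of $\hat{P}$ is the set of all traces that contain a contiguous sub-trace equal to $\pi$ or to $\hat{\pi}\cdot\hat{\pi}$ for some accelerator $\hat{\pi}$ of $\hat{P}$ (with corresponding looping trace $\pi$) satisfying $\pi\preceq\hat{\pi}$. *)

(* Defs.v *)
From mathcomp Require Import all_boot.
Set Implicit Arguments. Unset Strict Implicit. Unset Printing Implicit Defensive.

Section Programs.
Variables (Var : eqType) (Val : Type).

Definition state := Var -> Val.
Definition upd (s : state) (x : Var) (v : Val) : state :=
  fun y => if y == x then v else s y.

Inductive stmt :=
| Assign of Var & (state -> Val)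
| Havoc of Var
| Assume of (state -> Prop)
| Skip.

Definition relS := state -> state -> Prop.
Definition rcomp (r1 r2 : relS) : relS :=
  fun s s'' => exists s', r1 s s' /\ r2 s' s''.

Definition sem_stmt (st : stmt) : relS :=
  match st with
  | Assign x e => fun s s' => s' = upd s x (e s)
  | Havoc x => fun s s' => exists v, s' = upd s x v
  | Assume B => fun s s' => s' = s /\ B s
  | Skip => fun s s' => s' = s
  end.

Fixpoint sem (t : seq stmt) : relS :=
  match t with
  | [::] => fun s s' => s' = s
  | st :: t' => rcomp (sem_stmt st) (sem t')
  end.

Fixpoint sem_pow (t : seq stmt) (n : nat) : relS :=
  match n with
  | 0 => fun s s' => s' = s
  | n'.+1 => rcomp (sem t) (sem_pow t n')
  end.

Definition is_accelerator (pi pihat : seq stmt) : Prop :=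
  forall s s', sem pihat s s' <-> exists i, sem_pow pi i s s'.

Definition is_ua_accelerator (pi pihat : seq stmt) : Prop :=
  exists beta : state -> nat,
    (forall s s', sem pihat s s' <-> exists2 i, i <= beta s & sem_pow pi i s s') /\
    (forall s s' i, i <= beta s -> sem_pow pi i s s' -> beta s' <= beta s - i).

Definition subsumed (rho rho' : seq stmt) : Prop :=
  forall s s', sem rho s s' -> sem rho' s s'.

(** Control-flow automata: finite vertex set, statement-labelled edges
    (edges are objects, so occurrences are distinguishable), initial vertex. *)
Record cfa := CFA {
  vtx : finType;
  edg : finType;
  esrc : edg -> vtx;
  edst : edg -> vtx;
  elbl : edg -> stmt;
  vinit : vtx }.

(** A trace is identified with its edge sequence (path); its statement
    sequence is [labels]. *)
Definition labels (P : cfa) (p : seq (edg P)) : seq stmt := map (@elbl P) p.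

Fixpoint is_path (P : cfa) (v : vtx P) (p : seq (edg P)) : Prop :=
  match p with
  | [::] => True
  | e :: p' => esrc e = v /\ is_path (edst e) p'
  end.

Definition path_end (P : cfa) (v : vtx P) (p : seq (edg P)) : vtx P :=
  foldl (fun _ e => edst e) v p.

Definition looping (P : cfa) (v : vtx P) (p : seq (edg P)) : Prop :=
  is_path v p /\ path_end v p = v.

Definition accepted (P : cfa) (p : seq (edg P)) : Prop := is_path (vinit P) p.

Record accel_data (P : cfa) := AccelData {
  nacc : nat;
  ahead : 'I_nacc -> vtx P;
  aloop : 'I_nacc -> seq (edg P);
  ahat : 'I_nacc -> seq stmt }.

Section Accelerated.
Variables (P : cfa) (D : accel_data P).

(** New vertices/edges of the added loops: index (j, i), i < |pihat_j|. *)
Definition loopidx := {j : 'I_(nacc D) & 'I_(size (ahat j))}.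
Definition vhat : finType := (vtx P + loopidx)%type.
Definition ehat : finType := (edg P + loopidx)%type.

(** i-th vertex of the j-th added loop: vertex 0 and vertex |pihat_j| are
    the head v_j, the others are fresh. *)
Definition lnode (j : 'I_(nacc D)) (i : nat) : vhat :=
  if 0 < i then
    match (insub i : option 'I_(size (ahat j))) with
    | Some o => inr (Tagged (fun j => 'I_(size (ahat j))) o)
    | None => inl (ahead j)
    end
  else inl (ahead j).

Definition hsrc (e : ehat) : vhat :=
  match e with inl e => inl (esrc e) | inr t => lnode (tag t) (tagged t) end.
Definition hdst (e : ehat) : vhat :=
  match e with inl e => inl (edst e) | inr t => lnode (tag t) (tagged t).+1 end.
Definition hlbl (e : ehat) : stmt :=
  match e with inl e => elbl e | inr t => nth Skip (ahat (tag t)) (tagged t) end.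

Definition hat : cfa := @CFA vhat ehat hsrc hdst hlbl (inl (vinit P)).

Definition loop_edges (j : 'I_(nacc D)) : seq ehat :=
  [seq (inr (Tagged (fun j => 'I_(size (ahat j))) i) : ehat)
  | i <- enum 'I_(size (ahat j))].

Definition accel_wf : Prop :=
  forall j : 'I_(nacc D),
    aloop j <> [::] /\ ahat j <> [::] /\
    looping (ahead j) (aloop j) /\
    (is_accelerator (labels (aloop j)) (ahat j) \/
     is_ua_accelerator (labels (aloop j)) (ahat j)).

Definition contains (rho x : seq ehat) : Prop :=
  exists a b, rho = a ++ x ++ b.

Definition in_LR (rho : seq ehat) : Prop :=
  exists j : 'I_(nacc D),
    subsumed (labels (aloop j)) (ahat j) /\
    (contains rho (map inl (aloop j)) \/
     contains rho (loop_edges j ++ loop_edges j)).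

End Accelerated.
End Programs.

(* Main.v *)
Require Import Defs.
From mathcomp Require Import all_boot zify.

Section H.
Variables (Var : eqType) (Val : Type).

Lemma sem_cat (x y : seq (stmt Var Val)) s s'' :
  sem (x ++ y) s s'' <-> exists s', sem x s s' /\ sem y s' s''.
Proof.
elim: x s => [|st x IH] s /=.
  split; [by move=> H; exists s | by move=> [s' [-> H]]].
split.
  move=> [s1 [H1 /IH [s2 [H2 H3]]]]; exists s2; split => //; by exists s1.
move=> [s2 [[s1 [H1 H2]] H3]]; exists s1; split => //; apply/IH; by exists s2.
Qed.

Lemma subsumed_mid (a x x' b : seq (stmt Var Val)) :
  subsumed x x' -> subsumed (a ++ x ++ b) (a ++ x' ++ b).
Proof.
move=> H s s' /sem_cat [s1 [Ha /sem_cat [s2 [Hx Hb]]]].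
apply/sem_cat; exists s1; split => //; apply/sem_cat; exists s2; split => //.
exact: H.
Qed.

Lemma sem_pow_add (pi : seq (stmt Var Val)) i i' s1 s2 s3 :
  sem_pow pi i s1 s2 -> sem_pow pi i' s2 s3 -> sem_pow pi (i + i') s1 s3.
Proof.
elim: i s1 => [|i IH] s1 /=; first by move=> ->.
move=> [t [Ht Hp]] H; exists t; split => //; exact: IH Hp H.
Qed.

Lemma is_path_cat (P : cfa Var Val) v (x y : seq (edg P)) :
  is_path v (x ++ y) <-> is_path v x /\ is_path (path_end v x) y.
Proof.
elim: x v => [|e x IH] v /=; first by split => // [[]].
rewrite /path_end /= -/(path_end _ _).
split; [move=> [-> /IH [H1 H2]] | move=> [[-> H1] H2]]; split => //.
by apply/IH.
Qed.

Lemma path_end_cat (P : cfa Var Val) v (x y : seq (edg P)) :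
  path_end v (x ++ y) = path_end (path_end v x) y.
Proof. by rewrite /path_end foldl_cat. Qed.

Lemma path_end_indep (P : cfa Var Val) v w (x : seq (edg P)) :
  x <> [::] -> path_end v x = path_end w x.
Proof. by case: x => //= e x _; rewrite /path_end /=. Qed.
End H.

Theorem lemma2 (Var : eqType) (Val : Type) (P : cfa Var Val)
    (D : accel_data P) (rho1 : seq (ehat D)) :
  accel_wf D ->
  @accepted _ _ (hat D) rho1 ->
  in_LR rho1 ->
  exists rho2 : seq (ehat D),
    @accepted _ _ (hat D) rho2 /\
    subsumed (@labels _ _ (hat D) rho1) (@labels _ _ (hat D) rho2) /\
    ~~ subseq rho1 rho2.
Proof.
move=> Hwf Hacc [j [Hsub Hc]].
have [Hl [Hh [[Hlp Hle] Hacl]]] := Hwf j.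
set n := size (ahat j).
pose f := fun i : 'I_n => (inr (Tagged (fun j => 'I_(size (ahat j))) i) : ehat D).
have LE : loop_edges j = map f (enum 'I_n) by [].
have Lne : loop_edges j <> [::].
  move=> E0; have : size (loop_edges j) = 0 by rewrite E0.
  rewrite LE size_map size_enum_ord /n; by case: (ahat j) Hh.
have gen : forall (s : seq 'I_n) m, map val s = iota m (size s) ->
   @is_path _ _ (hat D) (lnode j m) (map f s) /\
   @path_end _ _ (hat D) (lnode j m) (map f s) = lnode j (m + size s).
  elim => [|i s IH] m /=; first by rewrite addn0.
  move=> [Ei Es]; have [H1 H2] := IH _ Es.
  rewrite /path_end /= -/(path_end _ _) /= -Ei.
  rewrite Ei -addSnnS; split => //.
have Lnode0 : lnode j 0 = inl (ahead j) by [].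
have LnodeN : lnode j n = inl (ahead j).
  rewrite /lnode; case: ifP => // _; by rewrite insubF ?ltnn.
have [LP LPE] : @is_path _ _ (hat D) (inl (ahead j)) (loop_edges j) /\
   @path_end _ _ (hat D) (inl (ahead j)) (loop_edges j) = inl (ahead j).
  have H0 : map val (enum 'I_n) = iota 0 (size (enum 'I_n)).
    by rewrite val_enum_ord size_enum_ord.
  have [A B] := gen (enum 'I_n) 0 H0.
  rewrite LE -Lnode0.
  split; first exact: A. by rewrite B size_enum_ord LnodeN.
have Llab : @labels _ _ (hat D) (loop_edges j) = ahat j.
  rewrite LE /labels -map_comp.
  have -> : (@elbl _ _ (hat D) \o f) = (nth (@Skip Var Val) (ahat j)) \o val by [].
  by rewrite map_comp val_enum_ord -/(mkseq _ _) mkseq_nth.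
have cnt : forall (p : pred (ehat D)) a x b y,
    count p x < count p y -> ~~ subseq (a ++ y ++ b) (a ++ x ++ b).
  move=> p a x b y Hl'; apply/negP => /(leq_count_subseq p).
  by rewrite !count_cat leq_add2l leq_add2r leqNgt Hl'.
case: Hc => [[a [b E]] | [a [b E]]].
- exists (a ++ loop_edges j ++ b); rewrite E.
  move: Hacc; rewrite /accepted E => /is_path_cat [Ha /is_path_cat [Hm Hb]].
  have Ea : @path_end _ _ (hat D) (vinit (hat D)) a = (inl (ahead j) : vhat D).
    move: Hm Hl Hlp; case: (aloop j) => //= e p [H1 _] _ [H2 _]; by rewrite -H1 /= H2.
  have pe : forall v (p : seq (edg P)),
      @path_end _ _ (hat D) (inl v) (map inl p) = inl (path_end v p).
    by move=> v p; elim: p v => //= e p IH v; rewrite /path_end /= -!/(path_end _ _) IH.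
  rewrite Ea pe Hle in Hb.
  split; [|split].
  + apply/is_path_cat; split => //; apply/is_path_cat; rewrite Ea LPE; by split.
    rewrite /labels !map_cat; rewrite /labels in Llab; rewrite Llab.
    have -> : map (@elbl _ _ (hat D)) (map inl (aloop j)) = labels (aloop j).
      by rewrite -map_comp.
    exact: subsumed_mid.
  + apply: (cnt (fun e => if e is inl _ then true else false)).
    rewrite LE !count_map (@eq_count _ _ pred0) ?count_pred0 //; case: (aloop j) Hl => //= e p _.
- exists (a ++ loop_edges j ++ b); rewrite E.
  move: Hacc; rewrite /accepted E => /is_path_cat [Ha /is_path_cat [Hm Hb]].
  split; [|split].
  + apply/is_path_cat; split => //; apply/is_path_cat.
    move/is_path_cat: Hm => [Hm1 Hm2]; split => //.
    move: Hb; rewrite path_end_cat (@path_end_indep _ _ _ (path_end (path_end (vinit (hat D)) a) (loop_edges j)) (path_end (vinit (hat D)) a) (loop_edges j) Lne) //.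
  + rewrite /labels !map_cat; rewrite /labels in Llab; rewrite Llab.
    apply: subsumed_mid => s s' /sem_cat [s1 [H1 H2]].
    case: Hacl => [Hx | [beta [Hb1 Hb2]]].
    * apply/Hx; move/Hx: H1 => [i Hi]; move/Hx: H2 => [i' Hi'].
      exists (i + i'); exact: sem_pow_add Hi Hi'.
    * apply/Hb1; move/Hb1: H1 => [i Hi Hpi]; move/Hb1: H2 => [i' Hi' Hpi'].
      have := Hb2 _ _ _ Hi Hpi => Hbb.
      exists (i + i'); first by lia.
      exact: sem_pow_add Hpi Hpi'.
  + apply: (cnt (fun e => if e is inr _ then true else false)).
    rewrite count_cat LE count_map (@eq_count _ _ predT) ?count_predT //.
    rewrite size_enum_ord /n; by case: (ahat j) Hh => //= e p _; lia.
Qed.
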